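(* Let $\mathcal{G}_N$ be the Newton group of transformations of $\mathbb{R}^4=\mathbb{R}^3\times\mathbb{R}$ of the form $(\mathbf{x},x^4)\mapsto(S\mathbf{x},x^4)+b$ ($S\in SO(3)$, $b\in\mathbb{R}^4$), and $\mathcal{G}$ the Galilei group of transformations $x\mapsto\begin{pmatrix}S&w\\0^T&1\end{pmatrix}x+b$ ($S\in SO(3)$, $w\in\mathbb{R}^3$, $b\in\mathbb{R}^4$). Say an equivalence relation $\sim$ on $\mathbb{R}^4$ satisfies the causality condition if $x\sim y$ implies $x^4=y^4$ (causally connectible events, i.e. events with different time coordinate, are never equivalent). Then the only nontrivial $\mathcal{G}_N$-invariant (respectively, the only nontrivial $\mathcal{G}$-invariant) equivalence relation on $\mathbb{R}^4$ satisfying the causality condition is absolute simultaneity: $x\sim y\iff x^4=y^4$.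
   Context: An equivalence relation is invariant under a group of transformations if $x\sim y$ implies $h(x)\sim h(y)$ for all $x,y$ and all $h$ in the group. It is trivial if it is the total relation or the identity relation (diagonal). *)

(* Defs.v *)
From HB Require Import structures.
From mathcomp Require Import all_boot all_order all_algebra.
From mathcomp Require Import reals.
Set Implicit Arguments. Unset Strict Implicit. Unset Printing Implicit Defensive.
Import Order.TTheory GRing.Theory Num.Theory.
Local Open Scope ring_scope.

(* Points of R^4 = R^3 x R as column vectors of size 3+1; the last
   coordinate x^4 is the time coordinate. *)
Definition pt (R : realType) := 'cV[R]_(3 + 1).

Definition time (R : realType) (x : pt R) : R := x (rshift 3 (ord0 : 'I_1)) 0.

Definition SO3 (R : realType) (S : 'M[R]_3) : Prop :=
  S *m S^T = 1%:M /\ \det S = 1.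

Definition newton_group (R : realType) (h : pt R -> pt R) : Prop :=
  exists (S : 'M[R]_3) (b : pt R), SO3 S /\
    forall x, h x = block_mx S (0 : 'M[R]_(3,1)) (0 : 'M[R]_(1,3)) (1 : 'M[R]_1) *m x + b.

Definition galilei_group (R : realType) (h : pt R -> pt R) : Prop :=
  exists (S : 'M[R]_3) (w : 'cV[R]_3) (b : pt R), SO3 S /\
    forall x, h x = block_mx S w (0 : 'M[R]_(1,3)) (1 : 'M[R]_1) *m x + b.

Definition is_equivalence (T : Type) (E : T -> T -> Prop) : Prop :=
  (forall x, E x x) /\ (forall x y, E x y -> E y x) /\
  (forall x y z, E x y -> E y z -> E x z).

Definition invariant_under (T : Type) (G : (T -> T) -> Prop) (E : T -> T -> Prop) : Prop :=
  forall h, G h -> forall x y, E x y -> E (h x) (h y).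

Definition trivial_rel (T : Type) (E : T -> T -> Prop) : Prop :=
  (forall x y, E x y) \/ (forall x y, E x y <-> x = y).

Definition causal (R : realType) (E : pt R -> pt R -> Prop) : Prop :=
  forall x y, E x y -> time x = time y.

(* Main.v *)
Require Import Defs.
From HB Require Import structures.
From mathcomp Require Import all_boot all_order all_algebra.
From mathcomp Require Import reals ring lra.
From Stdlib Require Import Classical.
Set Implicit Arguments. Unset Strict Implicit. Unset Printing Implicit Defensive.
Import Order.TTheory GRing.Theory Num.Theory.
Local Open Scope ring_scope.
Section S.
Variable R : realType.

Definition v3 (a b c : R) : 'cV[R]_3 := \col_(i < 3) nth 0 [:: a; b; c] i.
Definition Rz (c s : R) : 'M[R]_3 :=
  \matrix_(i < 3, j < 3) nth 0 (nth [::] [:: [:: c; -s; 0]; [:: s; c; 0]; [:: 0; 0; 1]] i) j.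
Definition Rx (c s : R) : 'M[R]_3 :=
  \matrix_(i < 3, j < 3) nth 0 (nth [::] [:: [:: 1; 0; 0]; [:: 0; c; -s]; [:: 0; s; c]] i) j.

Ltac ord3 i := case: i => [[|[|[|?]]] ?] //=.

Lemma det3 (A : 'M[R]_3) : \det A =
  A 0 0 * (A 1 1 * A 2 2 - A 1 2 * A 2 1) - A 0 1 * (A 1 0 * A 2 2 - A 1 2 * A 2 0)
  + A 0 2 * (A 1 0 * A 2 1 - A 1 1 * A 2 0).
Proof.
pose B (i j : nat) := A (inord i) (inord j).
have hB : forall i j : 'I_3, A i j = B i j by move=> i j; rewrite /B !inord_val.
rewrite (expand_det_row _ 0) !big_ord_recl big_ord0 /cofactor.
rewrite !(expand_det_row _ 0) !big_ord_recl !big_ord0 /cofactor !det_mx11 !mxE !hB /=.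
rewrite /bump /=.
ring.
Qed.

Lemma v3E (u : 'cV[R]_3) : u = v3 (u 0 0) (u 1 0) (u 2 0).
Proof.
apply/matrixP => i j; rewrite !mxE (ord1 j).
pose B (i : nat) := u (inord i) 0.
have hB : forall i : 'I_3, u i 0 = B i by move=> k; rewrite /B !inord_val.
rewrite !hB; ord3 i.
Qed.

Lemma v3D a b c a' b' c' : v3 a b c + v3 a' b' c' = v3 (a + a') (b + b') (c + c').
Proof. by apply/matrixP => i j; rewrite !mxE; ord3 i. Qed.

Lemma mulv3 (A : 'M[R]_3) a b c : A *m v3 a b c =
  v3 (A 0 0 * a + A 0 1 * b + A 0 2 * c) (A 1 0 * a + A 1 1 * b + A 1 2 * c)
     (A 2 0 * a + A 2 1 * b + A 2 2 * c).
Proof.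
pose B (i j : nat) := A (inord i) (inord j).
have hB : forall i j : 'I_3, A i j = B i j by move=> i j; rewrite /B !inord_val.
apply/matrixP => i j; rewrite !mxE !big_ord_recl big_ord0 !mxE !hB /=.
ord3 i; rewrite /bump /=; ring.
Qed.

Lemma SO3_Rz c s : c ^+ 2 + s ^+ 2 = 1 -> SO3 (Rz c s).
Proof.
move=> h; split.
  apply/matrixP => i j; rewrite !mxE !big_ord_recl big_ord0 !mxE /=.
  ord3 i; ord3 j; rewrite /bump /=; first [ring | nra].
rewrite (det3 (Rz c s)) !mxE /=. nra.
Qed.

Lemma SO3_Rx c s : c ^+ 2 + s ^+ 2 = 1 -> SO3 (Rx c s).
Proof.
move=> h; split.
  apply/matrixP => i j; rewrite !mxE !big_ord_recl big_ord0 !mxE /=.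
  ord3 i; ord3 j; rewrite /bump /=; first [ring | nra].
rewrite (det3 (Rx c s)) !mxE /=; nra.
Qed.

Lemma Rz_v3 c s a b d : Rz c s *m v3 a b d = v3 (c * a - s * b) (s * a + c * b) d.
Proof. rewrite mulv3 !mxE /=; congr v3; ring. Qed.
Lemma Rx_v3 c s a b d : Rx c s *m v3 a b d = v3 a (c * b - s * d) (s * b + c * d).
Proof. rewrite mulv3 !mxE /=; congr v3; ring. Qed.


Definition sp (u : 'cV[R]_3) : pt R := col_mx u (0 : 'cV[R]_1).

Lemma time_col (u : 'cV[R]_3) (t : 'cV[R]_1) : time (col_mx u t : pt R) = t 0 0.
Proof. by rewrite /time col_mxEd. Qed.

Lemma timeD (x y : pt R) : time (x + y) = time x + time y.
Proof. by rewrite /time mxE. Qed.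

Lemma hmap (S : 'M[R]_3) (w : 'cV[R]_3) (u : 'cV[R]_3) (t : 'cV[R]_1) :
  block_mx S w (0 : 'M[R]_(1,3)) (1 : 'M[R]_1) *m col_mx u t = col_mx (S *m u + w *m t) t :> pt R.
Proof. by rewrite mul_block_col mul0mx mul1mx add0r. Qed.

Lemma time_g (S : 'M[R]_3) (w : 'cV[R]_3) (b x : pt R) :
  time (block_mx S w (0 : 'M[R]_(1,3)) (1 : 'M[R]_1) *m x + b) = time x + time b.
Proof. by rewrite -(vsubmxK x) hmap timeD !time_col. Qed.

Lemma SO3_1 : SO3 (1%:M : 'M[R]_3).
Proof. by split; [rewrite trmx1 mulmx1 | rewrite det1]. Qed.

Section Inv.
Variable E : pt R -> pt R -> Prop.
Hypothesis Eeq : is_equivalence E.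
Hypothesis Einv : invariant_under (@newton_group R) E.

Lemma Etr x y c : E x y -> E (x + c) (y + c).
Proof.
move=> h.
have hg : newton_group (fun z => block_mx 1%:M (0 : 'M[R]_(3,1)) (0 : 'M[R]_(1,3)) (1 : 'M[R]_1) *m z + c).
  by exists 1%:M, c; split => //; exact: SO3_1.
have := Einv hg h.
have -> : block_mx 1%:M (0 : 'M[R]_(3,1)) (0 : 'M[R]_(1,3)) (1 : 'M[R]_1) = 1%:M :> 'M[R]_(3+1).
  by rewrite (scalar_mx_block 3 1 1).
by rewrite !mul1mx.
Qed.

Lemma Erot S x y : SO3 S -> E x y ->
  E (block_mx S (0 : 'M[R]_(3,1)) (0 : 'M[R]_(1,3)) (1 : 'M[R]_1) *m x)
    (block_mx S (0 : 'M[R]_(3,1)) (0 : 'M[R]_(1,3)) (1 : 'M[R]_1) *m y).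
Proof.
move=> hS h.
have hg : newton_group (fun z => block_mx S (0 : 'M[R]_(3,1)) (0 : 'M[R]_(1,3)) (1 : 'M[R]_1) *m z + 0).
  by exists S, 0.
by have := Einv hg h; rewrite !addr0.
Qed.

Definition W u := E 0 (sp u).

Lemma WD u v : W u -> W v -> W (u + v).
Proof.
case: Eeq => _ [_ Etrans] hu hv; apply: Etrans hu _.
have := Etr (sp u) hv; rewrite add0r /sp add_col_mx addr0 addrC; apply.
Qed.

Lemma WN u : W u -> W (- u).
Proof.
case: Eeq => _ [Esym _] hu; apply: Esym.
have := Etr (- sp u) hu; rewrite add0r subrr /sp opp_col_mx oppr0; apply.
Qed.

Lemma WR S u : SO3 S -> W u -> W (S *m u).
Proof.
move=> hS hu; have := Erot hS hu; rewrite mulmx0 /sp hmap mulmx0 addr0; apply.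
Qed.

Definition W3 a b c := W (v3 a b c).

Lemma W3eq a b c a' b' c' : W3 a b c -> a = a' -> b = b' -> c = c' -> W3 a' b' c'.
Proof. by move=> h <- <- <-. Qed.

Lemma W3D a b c a' b' c' : W3 a b c -> W3 a' b' c' -> W3 (a + a') (b + b') (c + c').
Proof. by move=> h h'; rewrite /W3 -v3D; apply: WD. Qed.

Lemma W3N a b c : W3 a b c -> W3 (- a) (- b) (- c).
Proof.
move=> h; have := WN h; have -> : - v3 a b c = v3 (-a) (-b) (-c).
  by apply/matrixP => i j; rewrite !mxE; ord3 i.
by [].
Qed.

Lemma W3z c s a b d : c ^+ 2 + s ^+ 2 = 1 -> W3 a b d -> W3 (c * a - s * b) (s * a + c * b) d.
Proof. by move=> h hw; rewrite /W3 -Rz_v3; apply: WR => //; apply: SO3_Rz. Qed.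

Lemma W3x c s a b d : c ^+ 2 + s ^+ 2 = 1 -> W3 a b d -> W3 a (c * b - s * d) (s * b + c * d).
Proof. by move=> h hw; rewrite /W3 -Rx_v3; apply: WR => //; apply: SO3_Rx. Qed.

Lemma W3n a b c n : W3 a b c -> W3 (a *+ n) (b *+ n) (c *+ n).
Proof.
move=> h; elim: n => [|n IH].
  rewrite !mulr0n /W3 /W; have -> : sp (v3 0 0 0) = 0.
    by rewrite /sp; apply/matrixP => i j; rewrite !mxE; case: splitP => k _; rewrite !mxE //; ord3 k.
  by case: Eeq.
by apply: W3eq (W3D h IH) _ _ _; rewrite mulrS.
Qed.

Lemma e_m10 : (-1) ^+ 2 + 0 ^+ 2 = 1 :> R. Proof. ring. Qed.
Lemma e_01 : 0 ^+ 2 + 1 ^+ 2 = 1 :> R. Proof. ring. Qed.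

Lemma W3axis a b c : W3 a b c -> (a != 0) || (b != 0) || (c != 0) ->
  exists k, k != 0 /\ W3 k 0 0.
Proof.
move=> h hnz.
have h1 := W3z e_m10 h.
case/orP: hnz => [/orP [ha|hb]|hc].
- exists (a + a); split; first by rewrite -mulr2n mulrn_eq0 negb_or ha.
  by apply: W3eq (W3D h (W3x e_m10 h)) _ _ _; ring.
- have hy := W3D h (W3x e_m10 h1).
  exists (- (b + b)); split; first by rewrite oppr_eq0 -mulr2n mulrn_eq0 negb_or hb.
  by apply: W3eq (W3z e_01 hy) _ _ _; ring.
- have hz := W3D h h1.
  exists (c + c); split; first by rewrite -mulr2n mulrn_eq0 negb_or hc.
  by apply: W3eq (W3z e_01 (W3x e_01 hz)) _ _ _; ring.
Qed.

Lemma W3pos a b c : W3 a b c -> (a != 0) || (b != 0) || (c != 0) ->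
  exists k, 0 < k /\ W3 k 0 0.
Proof.
move=> h hnz; have [k [hk hw]] := W3axis h hnz.
case: (ltrgtP k 0) => hk0.
- exists (- k); split; first by rewrite oppr_gt0.
  by apply: W3eq (W3N hw) _ _ _; rewrite ?oppr0.
- by exists k.
- by move: hk; rewrite hk0 eqxx.
Qed.

Lemma W3int k t : 0 < k -> W3 k 0 0 -> 0 <= t -> t <= k -> W3 t 0 0.
Proof.
move=> hk hw ht0 htk.
set u := t / (k + k).
have hkk : 0 < k + k by rewrite addr_gt0.
have hu0 : 0 <= u by rewrite divr_ge0 // ltW.
have hu1 : u <= 1 by rewrite ler_pdivrMr // mul1r; lra.
have hut : u * (k + k) = t by rewrite /u divfK // gt_eqF.
set cc := 1 - u.
set ss := Num.sqrt (1 - cc ^+ 2).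
have hpos : 0 <= 1 - cc ^+ 2 by rewrite /cc; nra.
have Hc : cc ^+ 2 + ss ^+ 2 = 1 by rewrite /ss sqr_sqrtr //; ring.
have g1 := W3z Hc hw.
have g2 := W3D hw (W3N g1).
have g3 := W3x e_m10 g2.
apply: W3eq (W3D g2 g3) _ _ _; rewrite ?mulr0 ?addr0 ?oppr0 //.
- by rewrite -hut /cc; ring.
- ring.
- ring.
Qed.

Lemma W3all k : 0 < k -> W3 k 0 0 -> forall t, W3 t 0 0.
Proof.
move=> hk hw.
have small : forall t, `|t| <= k -> W3 t 0 0.
  move=> t; case: (lerP 0 t) => ht.
    by rewrite ger0_norm // => htk; apply: W3int hk hw ht htk.
  rewrite ltr0_norm // => htk.
  have hnt : 0 <= - t by rewrite oppr_ge0 ltW.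
  have := W3N (W3int hk hw hnt htk).
  by move=> h; apply: W3eq h _ _ _; rewrite ?opprK ?oppr0.
move=> t.
have hb0 : 0 <= `|t| / k by rewrite divr_ge0 // ltW.
have hb := archi_boundP hb0.
set n := Num.Def.archi_bound (`|t| / k) in hb.
have hn : 0 < n%:R :> R by apply: le_lt_trans hb.
have hn0 : n%:R != 0 :> R by rewrite gt_eqF.
have hs : `|t / n%:R| <= k.
  rewrite normrM normfV normr_nat ler_pdivrMr //.
  by move: hb; rewrite ltr_pdivrMr // => /ltW; rewrite mulrC.
have := W3n n (small _ hs).
by rewrite !mul0rn -(mulr_natr (t / n%:R)) divfK.
Qed.

Lemma W3every k : 0 < k -> W3 k 0 0 -> forall u, W u.
Proof.
move=> hk hw u; rewrite (v3E u).
have ha := W3all hk hw (u 0 0).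
have hb := W3all hk hw (u 1 0).
have hc := W3all hk hw (u 2 0).
have hb' : W3 0 (u 1 0) 0 by apply: W3eq (W3z e_01 hb) _ _ _; ring.
have hc' : W3 0 0 (u 2 0) by apply: W3eq (W3x e_01 (W3z e_01 hc)) _ _ _; ring.
by apply: W3eq (W3D ha (W3D hb' hc')) _ _ _; ring.
Qed.

End Inv.
Lemma time0 : time (0 : pt R) = 0.
Proof. by rewrite /time mxE. Qed.

Lemma timeN (x : pt R) : time (- x) = - time x.
Proof. by rewrite /time mxE. Qed.

Lemma sp_usub (z : pt R) : time z = 0 -> z = sp (usubmx z).
Proof.
move=> hz; rewrite -{1}(vsubmxK z) /sp; congr col_mx.
apply/matrixP => i j; rewrite (ord1 i) (ord1 j) !mxE; exact: hz.
Qed.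

Lemma main_dir (E : pt R -> pt R -> Prop) :
  is_equivalence E -> invariant_under (@newton_group R) E -> causal E -> ~ trivial_rel E ->
  forall x y, E x y <-> time x = time y.
Proof.
move=> Eeq Einv Ec Ent.
have [p [q [Epq npq]]] : exists p q, E p q /\ p <> q.
  apply: NNPP => hno; apply: Ent; right => p q; split.
    move=> Epq; apply: NNPP => hne; apply: hno; by exists p, q.
  by move=> ->; case: Eeq.
have Ez : E 0 (q - p) by have := Etr Einv (- p) Epq; rewrite subrr.
have tz : time (q - p) = 0 by rewrite -(Ec _ _ Ez) time0.
set u := usubmx (q - p).
have Wu : W E u by rewrite /W -/u -sp_usub.
have hnz : (u 0 0 != 0) || (u 1 0 != 0) || (u 2 0 != 0).
  apply: contraT; rewrite !negb_or !negbK => /andP [/andP [/eqP h0 /eqP h1] /eqP h2].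
  exfalso; apply: npq; apply/esym/eqP; rewrite -subr_eq0; apply/eqP.
  rewrite (sp_usub tz) -/u (v3E u) h0 h1 h2 /sp.
  apply/matrixP => i j; rewrite !mxE; case: splitP => k _; rewrite !mxE //; ord3 k.
have Wu3 : W3 E (u 0 0) (u 1 0) (u 2 0) by rewrite /W3 -v3E.
have [k [hk hw]] := W3pos Eeq Einv Wu3 hnz.
move=> x y; split; first exact: Ec.
move=> hxy.
have tz' : time (y - x) = 0 by rewrite timeD timeN hxy subrr.
have := Etr Einv x (W3every Eeq Einv hk hw (usubmx (y - x))).
by rewrite -sp_usub // add0r subrK.
Qed.
End S.

Theorem proposition3p11 (R : realType) :
  (forall E : pt R -> pt R -> Prop,
     (is_equivalence E /\ invariant_under (@newton_group R) E /\ causal E /\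
      ~ trivial_rel E)
     <-> (forall x y, E x y <-> time x = time y))
  /\
  (forall E : pt R -> pt R -> Prop,
     (is_equivalence E /\ invariant_under (@galilei_group R) E /\ causal E /\
      ~ trivial_rel E)
     <-> (forall x y, E x y <-> time x = time y)).
Proof.
have back : forall E : pt R -> pt R -> Prop, (forall x y, E x y <-> time x = time y) ->
   (is_equivalence E /\ (causal E /\ ~ trivial_rel E)).
  move=> E hE; split; last split.
  - split; first by move=> x; apply/hE.
    split; first by move=> x y /hE h; apply/hE.
    by move=> x y z /hE h1 /hE h2; apply/hE; rewrite h1 h2.
  - by move=> x y /hE.
  - case=> [htot|hid].
      have := hE 0 (col_mx 0 1%:M) ; case=> h _; move: (h (htot _ _)).
      by rewrite time0 time_col mxE /= => /eqP; rewrite eq_sym oner_eq0.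
    have : (0 : pt R) = sp (v3 1 0 0) by apply/hid/hE; rewrite time0 /sp time_col mxE.
    move/(congr1 (fun m : pt R => m (lshift 1 (0 : 'I_3)) 0)).
    by rewrite /sp col_mxEu !mxE /= => /eqP; rewrite eq_sym oner_eq0.
split=> E; split.
- by case=> Eeq [Einv [Ec Ent]]; apply: main_dir.
- move=> hE; have [Eeq [Ec Ent]] := back E hE; split=> //; split=> //.
  move=> h [S [b [hS hh]]] x y /hE hxy; apply/hE; by rewrite !hh !time_g hxy.
- case=> Eeq [Einv [Ec Ent]]; apply: main_dir => //.
  move=> h [S [b [hS hh]]]; apply: Einv; by exists S, 0, b.
- move=> hE; have [Eeq [Ec Ent]] := back E hE; split=> //; split=> //.
  move=> h [S [w [b [hS hh]]]] x y /hE hxy; apply/hE; by rewrite !hh !time_g hxy.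
Qed.
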